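(* Let $(A,E,\varepsilon,\tau)$ be an analytical $B$-$B$-non-commutative probability space and let $\widetilde{E}:L_2(A,\tau)\to L_2(B,\tau_B)$ denote the orthogonal projection. For all $a\in A$, $b,b_1,b_2\in B$, $\xi,\xi_1,\xi_2\in L_2(A,\tau)$ and $\zeta\in L_2(B,\tau_B)$: (i) $\tau(\xi)=\tau_B(\widetilde{E}(\xi))$; (ii) $\widetilde{E}(aL_b)=\widetilde{E}(aR_b)$; (iii) $\widetilde{E}(L_{b_1}R_{b_2}\xi)=b_1\widetilde{E}(\xi)b_2$; (iv) if $a\in A_\ell$, then $\widetilde{E}(a\zeta)=E(a)\zeta$; (v) if $a\in A_r$, then $\widetilde{E}(a\zeta)=\zeta E(a)$; (vi) if $\tau(L_b\xi_1)=\tau(L_b\xi_2)$ for all $b\in B$, then $\widetilde{E}(\xi_1)=\widetilde{E}(\xi_2)$; (vii) if $\tau(R_b\xi_1)=\tau(R_b\xi_2)$ for all $b\in B$, then $\widetilde{E}(\xi_1)=\widetilde{E}(\xi_2)$.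
   Context: Let $B$ be a unital $*$-algebra. A $B$-$B$-non-commutative probability space is a triple $(A,E,\varepsilon)$: $A$ a unital $*$-algebra, $\varepsilon:B\otimes B^{\mathrm{op}}\to A$ a unital $*$-homomorphism injective on $B\otimes 1$ and on $1\otimes B^{\mathrm{op}}$, and $E:A\to B$ unital linear with $E(\varepsilon(b_1\otimes b_2)a)=b_1E(a)b_2$ and $E(a\varepsilon(b\otimes 1))=E(a\varepsilon(1\otimes b))$. Write $L_b=\varepsilon(b\otimes1)$, $R_b=\varepsilon(1\otimes b)$, $A_\ell$ for the commutant of $\{R_b\}$ and $A_r$ for the commutant of $\{L_b\}$ in $A$. An analytical $B$-$B$-non-commutative probability space is $(A,E,\varepsilon,\tau)$ where $\tau$ is a state on $A$ with $\tau(a)=\tau(L_{E(a)})=\tau(R_{E(a)})$, $\tau_B(b):=\tau(L_b)$ is a tracial state on $B$, left multiplication by each $a\in A$ is bounded on $A/N_\tau$ ($N_\tau=\{a:\tau(a^*a)=0\}$) and so extends to a bounded operator on the Hilbert space $L_2(A,\tau)$ (completion of $A/N_\tau$ with $\langle a_1,a_2\rangle=\tau(a_2^*a_1)$), and $E$ is completely positive on $A_\ell$ and on $A_r$. Elements of $A$ are written for their classes in $L_2(A,\tau)$. $L_2(B,\tau_B)$ is identified with the closure of $\{L_b+N_\tau\}$ in $L_2(A,\tau)$; left and right multiplication by elements of $B$ extend to bounded operators on $L_2(B,\tau_B)$, and for $\zeta\in L_2(B,\tau_B)$ one has $L_{b_1}R_{b_2}\zeta=b_1\zeta b_2$. For $\xi\in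 L_2(A,\tau)$, $\tau(\xi):=\langle \xi,1_A+N_\tau\rangle$, and $\tau_B(\zeta)=\tau(\zeta)$ for $\zeta\in L_2(B,\tau_B)$. *)

(* Defs.v *)
(* scalars are the complex numbers R[i] (mathcomp-real-closed)
   over an arbitrary realType R; *-algebras are algType R[i] with an explicit
   involution; L_2(A,tau) is modelled by a Hilbert space with a dense GNS map. *)
From HB Require Import structures.
From mathcomp Require Import all_boot all_order all_algebra.
From mathcomp Require Import complex reals.
Set Implicit Arguments. Unset Strict Implicit. Unset Printing Implicit Defensive.
Import GRing.Theory Num.Theory.
Local Open Scope ring_scope.

Section Defs.
Variable R : realType.
Local Notation C := R[i].

Definition star_alg (A : algType C) (s : A -> A) : Prop :=
  [/\ (forall x y, s (x + y) = s x + s y),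
      (forall (c : C) x, s (c *: x) = c^* *: s x),
      (forall x y, s (x * y) = s y * s x) &
      forall x, s (s x) = x].

Definition clinear (U V : lmodType C) (f : U -> V) : Prop :=
  forall (c : C) x y, f (c *: x + y) = c *: f x + f y.

Definition mxstar (A : algType C) (s : A -> A) n (X : 'M[A]_n) : 'M[A]_n :=
  map_mx s X^T.

Definition mx_pos (A : algType C) (s : A -> A) n (X : 'M[A]_n) : Prop :=
  exists l : seq 'M[A]_n, X = \sum_(Y <- l) (mxstar s Y *m Y).

Definition cp_on (A B : algType C) (sA : A -> A) (sB : B -> B)
  (E : A -> B) (S : A -> Prop) : Prop :=
  forall n (X : 'M[A]_n), (forall i j, S (X i j)) ->
    mx_pos sB (map_mx E (mxstar sA X *m X)).

Definition commutant (A : Type) (mul : A -> A -> A) (D : A -> Prop) (a : A) : Prop :=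
  forall d, D d -> mul a d = mul d a.

(* eps : B (x) B^op -> A is encoded by its two commuting restrictions
   L b = eps (b (x) 1) and Rm b = eps (1 (x) b) (universal property of the
   algebraic tensor product). *)
Definition BB_ncps (A B : algType C) (sA : A -> A) (sB : B -> B)
  (L Rm : B -> A) (E : A -> B) : Prop :=
  [/\ star_alg sA /\ star_alg sB,
      [/\ clinear L, (forall x y, L (x * y) = L x * L y), L 1 = 1,
          (forall x, L (sB x) = sA (L x)) & injective L],
      [/\ clinear Rm, (forall x y, Rm (x * y) = Rm y * Rm x), Rm 1 = 1,
          (forall x, Rm (sB x) = sA (Rm x)) & injective Rm],
      (forall x y, L x * Rm y = Rm y * L x) &
      [/\ clinear E, E 1 = 1,
          (forall b1 b2 a, E (L b1 * Rm b2 * a) = b1 * E a * b2) &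
          forall a b, E (a * L b) = E (a * Rm b)]].

Definition analytical_BB_ncps (A B : algType C) (sA : A -> A) (sB : B -> B)
  (L Rm : B -> A) (E : A -> B) (tau : A -> C) : Prop :=
  [/\ BB_ncps sA sB L Rm E /\
      [/\ clinear tau, tau 1 = 1 & forall a, 0 <= tau (sA a * a)],
      (forall a, tau a = tau (L (E a)) /\ tau a = tau (Rm (E a))),
      (* tau_B(b) := tau(L b) is a tracial state on B *)
      [/\ tau (L 1) = 1, (forall b, 0 <= tau (L (sB b * b))) &
          forall b1 b2, tau (L (b1 * b2)) = tau (L (b2 * b1))],
      (forall a, exists K : C, 0 <= K /\
        forall x, tau (sA (a * x) * (a * x)) <= K * tau (sA x * x)) &
      (* E completely positive on A_l and A_r *)
      cp_on sA sB E (commutant *%R (fun d => exists b, d = Rm b)) /\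
      cp_on sA sB E (commutant *%R (fun d => exists b, d = L b))].

Definition hilbert_space (H : lmodType C) (ip : H -> H -> C) : Prop :=
  [/\ (forall (c : C) x y z, ip (c *: x + y) z = c * ip x z + ip y z),
      (forall x y, ip y x = (ip x y)^*),
      (forall x, 0 <= ip x x),
      (forall x, ip x x = 0 -> x = 0) &
      forall u : nat -> H,
        (forall e : C, 0 < e -> exists N, forall m n, (N <= m)%N -> (N <= n)%N ->
            ip (u m - u n) (u m - u n) < e) ->
        exists xi, forall e : C, 0 < e -> exists N, forall n, (N <= n)%N ->
            ip (u n - xi) (u n - xi) < e].

Definition hclosure (H : lmodType C) (ip : H -> H -> C) (S : H -> Prop) (xi : H) : Prop :=
  forall e : C, 0 < e -> exists eta, S eta /\ ip (xi - eta) (xi - eta) < e.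

(* (H, ip, iota) is L_2(A,tau): a Hilbert space with a linear map
   iota : A -> H (a |-> a + N_tau) with dense range and
   <iota a1, iota a2> = tau(a2^* a1).  This determines L_2(A,tau) up to
   unitary isomorphism. *)
Definition L2_of (A : algType C) (sA : A -> A) (tau : A -> C)
  (H : lmodType C) (ip : H -> H -> C) (iota : A -> H) : Prop :=
  [/\ hilbert_space ip, clinear iota,
      (forall a1 a2, ip (iota a1) (iota a2) = tau (sA a2 * a1)) &
      forall xi, hclosure ip (fun eta => exists a, eta = iota a) xi].

Definition left_mult_ext (A : algType C) (H : lmodType C) (ip : H -> H -> C)
  (iota : A -> H) (lam : A -> H -> H) : Prop :=
  forall a, [/\ clinear (lam a),
    (exists K : C, 0 <= K /\ forall xi, ip (lam a xi) (lam a xi) <= K * ip xi xi) &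
    forall x, lam a (iota x) = iota (a * x)].

(* L_2(B,tau_B) = closure of { L b + N_tau } in H *)
Definition L2B (A B : algType C) (H : lmodType C) (ip : H -> H -> C)
  (iota : A -> H) (L : B -> A) : H -> Prop :=
  hclosure ip (fun eta => exists b, eta = iota (L b)).

Definition orth_proj (H : lmodType C) (ip : H -> H -> C) (S : H -> Prop)
  (P : H -> H) : Prop :=
  forall xi, S (P xi) /\ forall eta, S eta -> ip (xi - P xi) eta = 0.

End Defs.

(* Main.v *)
Require Import Defs.
From HB Require Import structures.
From mathcomp Require Import all_boot all_order all_algebra.
From mathcomp Require Import complex reals.
From mathcomp Require Import ring.
Import Order.TTheory GRing.Theory Num.Theory.
Local Open Scope ring_scope.

Section Hil.
Variables (R : realType) (H : lmodType R[i]) (ip : H -> H -> R[i]).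
Hypothesis hH : hilbert_space ip.

Let hlin : forall (c : R[i]) x y z, ip (c *: x + y) z = c * ip x z + ip y z.
Proof. by case: hH. Qed.
Let hsym : forall x y, ip y x = (ip x y)^*.
Proof. by case: hH => _ h _ _ _; apply: h. Qed.
Lemma ip_ge0 x : 0 <= ip x x.
Proof. by case: hH => _ _ h _ _; apply: h. Qed.
Lemma ip_def x : ip x x = 0 -> x = 0.
Proof. by case: hH => _ _ _ h _; apply: h. Qed.

Lemma ip0l z : ip 0 z = 0.
Proof.
have h := hlin 1 0 0 z; rewrite scaler0 addr0 mul1r in h.
apply: esym; apply: (addrI (ip 0 z)); rewrite addr0; exact: h.
Qed.
Lemma ipDl x y z : ip (x + y) z = ip x z + ip y z.
Proof. by rewrite -{1}[x]scale1r hlin mul1r. Qed.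
Lemma ipZl c x z : ip (c *: x) z = c * ip x z.
Proof. by rewrite -[c *: x]addr0 hlin ip0l addr0. Qed.
Lemma ipNl x z : ip (- x) z = - ip x z.
Proof. by rewrite -scaleN1r ipZl mulN1r. Qed.
Lemma ipBl x y z : ip (x - y) z = ip x z - ip y z.
Proof. by rewrite ipDl ipNl. Qed.
Lemma ipDr x y z : ip z (x + y) = ip z x + ip z y.
Proof. by rewrite !(hsym _ z) ipDl rmorphD. Qed.
Lemma ipZr c x z : ip z (c *: x) = c^* * ip z x.
Proof. by rewrite !(hsym _ z) ipZl rmorphM. Qed.
Lemma ipNr x z : ip z (- x) = - ip z x.
Proof. by rewrite !(hsym _ z) ipNl rmorphN. Qed.
Lemma ipBr x y z : ip z (x - y) = ip z x - ip z y.
Proof. by rewrite ipDr ipNr. Qed.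
Lemma ip0r z : ip z 0 = 0.
Proof. by rewrite hsym ip0l rmorph0. Qed.

Lemma CS v w : `|ip v w| ^+ 2 <= ip v v * ip w w.
Proof.
have [M0|Mn0] := eqVneq (ip w w) 0.
  by rewrite (ip_def _ M0) ip0r ip0l normr0 expr0n /= mulr0.
have Mgt0 : 0 < ip w w by rewrite lt0r Mn0 ip_ge0.
set c := ip v w; set M := ip w w; set N := ip v v.
have Mc : M^* = M by rewrite geC0_conj // ip_ge0.
have := ip_ge0 (v - (c / M) *: w).
rewrite ipBl !ipBr !ipZl !ipZr -/c -/M -/N.
have sc : (c / M)^* = c^* / M by rewrite rmorphM fmorphV /= Mc.
rewrite [ip w v]hsym -/c sc.
have -> : N - c^* / M * c - (c / M * c^* - c / M * (c^* / M * M)) = N - c * c^* / M.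
  by field.
rewrite subr_ge0 ler_pdivrMr // -normCK mulrC; exact. 
Qed.


Lemma small (x K : R[i]) : 0 <= x -> 0 <= K ->
  (forall e, 0 < e -> x <= K * e) -> x = 0.
Proof.
move=> x0 K0 h; have [->//|xn0] := eqVneq x 0.
have xp : 0 < x by rewrite lt0r xn0.
have K1 : 0 < K + 1 by rewrite ltr_wpDl.
have ep : 0 < x / (K + 1) by rewrite divr_gt0.
have := h _ ep.
have : K * (x / (K + 1)) < (K + 1) * (x / (K + 1)).
  by rewrite ltr_pM2r // ltrDl ltr01.
rewrite [(K + 1) * _]mulrC divfK ?lt0r_neq0 // => h1 h2.
by have := le_lt_trans h2 h1; rewrite ltxx.
Qed.

Definition bnd (g : H -> R[i]) := exists K, 0 <= K /\ forall u, `|g u| ^+ 2 <= K * ip u u.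

Lemma ext0 (g : H -> R[i]) (P : H -> Prop) z :
  (forall u w, g (u - w) = g u - g w) -> bnd g ->
  (forall eta, P eta -> g eta = 0) -> hclosure ip P z -> g z = 0.
Proof.
move=> gB [K [K0 hK]] g0 hz.
suff : `|g z| ^+ 2 = 0 by move/eqP; rewrite sqrf_eq0 normr_eq0 => /eqP.
apply: (@small _ K); rewrite ?exprn_ge0 //.
move=> e e0; have [eta [Peta lt]] := hz e e0.
have -> : g z = g (z - eta) by rewrite gB (g0 _ Peta) subr0.
apply: (le_trans (hK _)); rewrite ler_wpM2l //; exact: ltW.
Qed.

Lemma bnd_ipl w : bnd (fun u => ip u w).
Proof. by exists (ip w w); split; [exact: ip_ge0| move=> u; rewrite mulrC CS]. Qed.

Lemma bnd_ipr w : bnd (fun u => ip w u).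
Proof.
exists (ip w w); split; [exact: ip_ge0| move=> u].
by rewrite hsym norm_conjC mulrC CS.
Qed.

Lemma bnd_comp g (T : H -> H) : bnd g ->
  (exists K : R[i], 0 <= K /\ forall xi, ip (T xi) (T xi) <= K * ip xi xi) ->
  bnd (fun u => g (T u)).
Proof.
move=> [K [K0 hK]] [K' [K'0 hK']]; exists (K * K'); split; first exact: mulr_ge0.
move=> u; apply: (le_trans (hK _)); rewrite -mulrA ler_wpM2l //.
Qed.

Lemma bnd_sub g1 g2 : bnd g1 -> bnd g2 -> bnd (fun u => g1 u - g2 u).
Proof.
move=> [K1 [K10 h1]] [K2 [K20 h2]]; exists (2 * K1 + 2 * K2); split.
  by rewrite addr_ge0 // mulr_ge0.
move=> u; set p := g1 u; set q := g2 u.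
have -> : (2 * K1 + 2 * K2) * ip u u = 2 * (K1 * ip u u) + 2 * (K2 * ip u u).
  by rewrite mulrDl !mulrA.
apply: (@le_trans _ _ (2 * `|p| ^+ 2 + 2 * `|q| ^+ 2)); last first.
  by apply: lerD; rewrite ler_pM2l //; [exact: h1|exact: h2].
apply: (@le_trans _ _ ((`|p| + `|q|) ^+ 2)).
  by rewrite lerXn2r ?ler_normB // qualifE /= ?addr_ge0.
rewrite -subr_ge0.
have -> : 2 * `|p| ^+ 2 + 2 * `|q| ^+ 2 - (`|p| + `|q|) ^+ 2 = (`|p| - `|q|) ^+ 2.
  by ring.
by rewrite -realEsqr realB // normr_real.
Qed.

Lemma inS (D : H -> Prop) eta : D eta -> hclosure ip D eta.
Proof. by move=> De e e0; exists eta; split => //; rewrite subrr ip0l. Qed.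

Lemma orthS (D : H -> Prop) v : (forall d, D d -> ip v d = 0) ->
  forall eta, hclosure ip D eta -> ip v eta = 0.
Proof.
move=> h eta he; apply: (@ext0 (fun u => ip v u) D) => //.
  by move=> u w; rewrite ipBr.
exact: bnd_ipr.
Qed.

Lemma proj_uniq (D : H -> Prop) Et : orth_proj ip (hclosure ip D) Et ->
  forall xi y, hclosure ip D y -> (forall d, D d -> ip (xi - y) d = 0) -> Et xi = y.
Proof.
move=> hP xi y hy h; have [hE hO] := hP xi.
have o : forall eta, hclosure ip D eta -> ip (Et xi - y) eta = 0.
  move=> eta he.
  have -> : Et xi - y = (xi - y) - (xi - Et xi).
    by rewrite opprB addrCA addrAC subrr add0r.
  by rewrite ipBl (orthS _ _ h _ he) (hO _ he) subrr.
apply/eqP; rewrite -subr_eq0; apply/eqP; apply: ip_def.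
by rewrite ipBr (o _ hE) (o _ hy) subrr.
Qed.

Lemma proj_eq (D : H -> Prop) Et : orth_proj ip (hclosure ip D) Et ->
  forall xi1 xi2, (forall d, D d -> ip (xi1 - xi2) d = 0) -> Et xi1 = Et xi2.
Proof.
move=> hP xi1 xi2 h; apply: (proj_uniq _ _ hP); first exact: (hP xi2).1.
move=> d Dd.
have -> : xi1 - Et xi2 = (xi1 - xi2) + (xi2 - Et xi2) by rewrite addrA subrK.
by rewrite ipDl h // ((hP xi2).2 _ (inS _ _ Dd)) addr0.
Qed.

Lemma inv_S (D : H -> Prop) (T : H -> H) (K : R[i]) :
  (forall x y, T (x - y) = T x - T y) -> 0 <= K ->
  (forall xi, ip (T xi) (T xi) <= K * ip xi xi) ->
  (forall d, D d -> D (T d)) ->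
  forall z, hclosure ip D z -> hclosure ip D (T z).
Proof.
move=> TB K0 hK hD z hz e e0.
have K1 : 0 < K + 1 by rewrite ltr_wpDl.
have ep : 0 < e / (K + 1) by rewrite divr_gt0.
have [eta [Deta lt]] := hz _ ep.
exists (T eta); split; first exact: hD.
rewrite -TB; apply: (le_lt_trans (hK _)).
apply: (@le_lt_trans _ _ (K * (e / (K + 1)))); first by rewrite ler_wpM2l // ltW.
have := ltr_pM2r ep K (K + 1); rewrite ltrDl ltr01 => h.
by move/esym: h; rewrite [(K + 1) * _]mulrC divfK ?lt0r_neq0.
Qed.
End Hil.

Lemma clinB (R : realType) (U V : lmodType R[i]) (f : U -> V) :
  clinear f -> forall x y, f (x - y) = f x - f y.
Proof.
move=> hf.
have f0 : f 0 = 0.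
  have h := hf 1 0 0; rewrite scaler0 addr0 scale1r in h.
  apply: esym; apply: (addrI (f 0)); rewrite addr0; exact: h.
move=> x y; have := hf (-1) y x; rewrite !scaleN1r addrC => ->.
by rewrite addrC.
Qed.
Arguments clinB {R U V f}.

Lemma clin0 (R : realType) (U V : lmodType R[i]) (f : U -> V) :
  clinear f -> f 0 = 0.
Proof. by move=> hf; rewrite -(subrr 0) (clinB hf) subrr. Qed.
Arguments clin0 {R U V f}.

Theorem proposition3p9 (R : realType) (A B : algType R[i])
  (sA : A -> A) (sB : B -> B) (L Rm : B -> A) (E : A -> B) (tau : A -> R[i])
  (H : lmodType R[i]) (ip : H -> H -> R[i]) (iota : A -> H)
  (lam : A -> H -> H) (Et : H -> H) :
  analytical_BB_ncps sA sB L Rm E tau ->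
  L2_of sA tau ip iota ->
  left_mult_ext ip iota lam ->
  orth_proj ip (L2B ip iota L) Et ->
  forall (a : A) (b b1 b2 : B) (xi xi1 xi2 zeta : H), L2B ip iota L zeta ->
  (* (i) *) ip xi (iota 1) = ip (Et xi) (iota 1) /\
  (* (ii) *) Et (iota (a * L b)) = Et (iota (a * Rm b)) /\
  (* (iii) *) Et (lam (L b1 * Rm b2) xi) = lam (L b1 * Rm b2) (Et xi) /\
  (* (iv) *) ((forall b', a * Rm b' = Rm b' * a) ->
              Et (lam a zeta) = lam (L (E a)) zeta) /\
  (* (v) *) ((forall b', a * L b' = L b' * a) ->
              Et (lam a zeta) = lam (Rm (E a)) zeta) /\
  (* (vi) *) ((forall b', ip (lam (L b') xi1) (iota 1) = ip (lam (L b') xi2) (iota 1)) ->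
              Et xi1 = Et xi2) /\
  (* (vii) *) ((forall b', ip (lam (Rm b') xi1) (iota 1) = ip (lam (Rm b') xi2) (iota 1)) ->
              Et xi1 = Et xi2).
Proof.
move=> [[hBB hstate] htauE htrace hbound hcp] [hH iotalin ipiota dense] hlam hP.
move: hBB => [[[sAD sAZ sAM sAK] [sBD sBZ sBM sBK]]
  [Llin LM L1 Ls Linj] [Rlin RM R1 Rs Rinj] LR [Elin E1 Ebim Ecomm]].
move: hstate => [taulin tau1 taupos].
set D := fun eta => exists b, eta = iota (L b).
have EL : forall c x, E (L c * x) = c * E x.
  by move=> c x; have := Ebim c 1 x; rewrite R1 mulr1 mulr1.
have ER : forall c x, E (Rm c * x) = E x * c.
  by move=> c x; have := Ebim 1 c x; rewrite L1 mul1r mul1r.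
have ELc : forall c, E (L c) = c.
  by move=> c; rewrite -[L c]mulr1 EL E1 mulr1.
have sAN : forall x, sA (- x) = - sA x.
  by move=> x; rewrite -scaleN1r sAZ rmorphN1 scaleN1r.
have sAB : forall x y, sA (x - y) = sA x - sA y.
  by move=> x y; rewrite sAD sAN.
have iotaB := clinB iotalin.
have EB := clinB Elin.
have tauB := clinB taulin.
have tauLE : forall z, tau z = tau (L (E z)) by move=> z; case: (htauE z).
have L0 := clin0 Llin.
have tau0 := clin0 taulin.
have L3 : forall x d, iota (x * L d) = iota (x * Rm d).
  move=> x d; apply/eqP; rewrite -subr_eq0; apply/eqP; rewrite -iotaB.
  apply: (@ip_def _ _ ip hH); rewrite ipiota tauLE -mulrBr sAM sAB -Ls -Rs.
  have W0 : E (sA x * (x * (L d - Rm d))) = 0.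
    by rewrite mulrA mulrBr EB Ecomm subrr.
  by rewrite -mulrA mulrBl EB EL ER W0 mulr0 mul0r subrr L0 tau0.
have LRD : forall c d, iota (L c * Rm d) = iota (L (c * d)).
  by move=> c d; rewrite -L3 LM.
have RLD : forall c d, iota (Rm d * L c) = iota (L (c * d)).
  by move=> c d; rewrite -LR LRD.
have lamB : forall a x y, lam a (x - y) = lam a x - lam a y.
  by move=> a' x y; case: (hlam a') => hl _ _; exact: (clinB hl).
have lamI : forall a x, lam a (iota x) = iota (a * x).
  by move=> a' x; case: (hlam a') => _ _ ->.
have lamK : forall a, exists K : R[i], (0 <= K) /\
    (forall xi : H, ip (lam a xi) (lam a xi) <= K * ip xi xi).
  by move=> a'; case: (hlam a').
have ipBl' := @ipBl _ _ ip hH.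
have Adj : forall a v y, ip (lam a v) (iota y) = ip v (iota (sA a * y)).
  move=> a' v y; apply/eqP; rewrite -subr_eq0; apply/eqP.
  apply: (@ext0 _ _ ip (fun u => ip (lam a' u) (iota y) - ip u (iota (sA a' * y)))
     (fun eta => exists a, eta = iota a) v).
  - by move=> u w; rewrite lamB !ipBl'; ring.
  - apply: (@bnd_sub _ _ ip (fun u => ip (lam a' u) (iota y)) (fun u => ip u (iota (sA a' * y)))).
      apply: (@bnd_comp _ _ ip (fun u => ip u (iota y)) (lam a')); last exact: lamK.
      exact: (@bnd_ipl _ _ ip hH).
    exact: (@bnd_ipl _ _ ip hH).
  - by move=> _ [x ->]; rewrite lamI !ipiota sAM sAK mulrA subrr.
  - exact: dense.
have inS' := @inS _ _ ip hH.
have puniq := @proj_uniq _ _ ip hH D Et hP.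
have peq := @proj_eq _ _ ip hH D Et hP.
have bndl := @bnd_ipl _ _ ip hH.
move=> a b b1 b2 xi xi1 xi2 zeta hz.
split.
  have h1 : ip (xi - Et xi) (iota 1) = 0.
    by apply: (hP xi).2; apply: inS'; exists 1; rewrite L1.
  by move/eqP: h1; rewrite ipBl' subr_eq0 => /eqP.
split; first by rewrite L3.
split.
  have [K [K0 hK]] := lamK (L b1 * Rm b2).
  apply: puniq.
    apply: (@inv_S _ _ ip D (lam (L b1 * Rm b2)) K) => //; last exact: (hP xi).1.
    move=> _ [c ->]; rewrite lamI; exists (b1 * c * b2).
    by rewrite -mulrA -LR mulrA -LM LRD.
  move=> _ [c ->]; rewrite -lamB Adj.
  apply: (hP xi).2; apply: inS'; exists (sB b1 * c * sB b2).
  by rewrite sAM -Ls -Rs -mulrA -LM RLD.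
split.
  move=> hcomm; have [K [K0 hK]] := lamK (L (E a)).
  apply: puniq.
    apply: (@inv_S _ _ ip D (lam (L (E a))) K) => //.
    by move=> _ [c ->]; rewrite lamI -LM; exists (E a * c).
  move=> _ [c ->]; rewrite ipBl'.
  apply: (@ext0 _ _ ip (fun u => ip (lam a u) (iota (L c)) - ip (lam (L (E a)) u) (iota (L c))) D zeta).
  - by move=> u w; rewrite !lamB !ipBl'; ring.
  - apply: (@bnd_sub _ _ ip (fun u => ip (lam a u) (iota (L c))) (fun u => ip (lam (L (E a)) u) (iota (L c)))).
      apply: (@bnd_comp _ _ ip (fun u => ip u (iota (L c))) (lam a)); [exact: bndl | exact: lamK].
    apply: (@bnd_comp _ _ ip (fun u => ip u (iota (L c))) (lam (L (E a)))); [exact: bndl | exact: lamK].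
  - move=> _ [d ->]; rewrite !lamI !ipiota; apply/eqP; rewrite subr_eq0; apply/eqP.
    by rewrite tauLE [RHS]tauLE -Ls !EL Ecomm hcomm ER ELc.
  - exact: hz.
split.
  move=> hcomm; have [K [K0 hK]] := lamK (Rm (E a)).
  apply: puniq.
    apply: (@inv_S _ _ ip D (lam (Rm (E a))) K) => //.
    by move=> _ [c ->]; rewrite lamI RLD; exists (c * E a).
  move=> _ [c ->]; rewrite ipBl'.
  apply: (@ext0 _ _ ip (fun u => ip (lam a u) (iota (L c)) - ip (lam (Rm (E a)) u) (iota (L c))) D zeta).
  - by move=> u w; rewrite !lamB !ipBl'; ring.
  - apply: (@bnd_sub _ _ ip (fun u => ip (lam a u) (iota (L c))) (fun u => ip (lam (Rm (E a)) u) (iota (L c)))).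
      apply: (@bnd_comp _ _ ip (fun u => ip u (iota (L c))) (lam a)); [exact: bndl | exact: lamK].
    apply: (@bnd_comp _ _ ip (fun u => ip u (iota (L c))) (lam (Rm (E a)))); [exact: bndl | exact: lamK].
  - move=> _ [d ->]; rewrite !lamI !ipiota; apply/eqP; rewrite subr_eq0; apply/eqP.
    by rewrite tauLE [RHS]tauLE -Ls !EL hcomm EL ER ELc.
  - exact: hz.
split.
  move=> h; apply: peq => _ [c ->].
  rewrite ipBl'; have := h (sB c); rewrite !Adj mulr1 -Ls sBK => ->; exact: subrr.
move=> h; apply: peq => _ [c ->].
have iR : iota (Rm c) = iota (L c) by rewrite -[Rm c]mul1r -L3 mul1r.
rewrite ipBl'; have := h (sB c); rewrite !Adj mulr1 -Rs sBK iR => ->; exact: subrr.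
Qed.
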